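(* If $G$ is a graph, then $D(G)=n(G)-1$ if and only if $G$ is isomorphic to one of $C_4$, $2K_2$, $K_{t,1}$ (for some $t\ge 2$), or $K_t\cup K_1$ (for some $t\ge 2$).
   Context: All graphs are finite and simple; $n(G)=|V(G)|$; $C_4$ is the 4-cycle, $K_{s,t}$ the complete bipartite graph, $G\cup H$ the disjoint union and $2K_2=K_2\cup K_2$. A distinguishing coloring of a graph $G$ is a (not necessarily proper) vertex coloring such that the only automorphism of $G$ mapping every vertex to a vertex of the same color is the identity; the distinguishing number $D(G)$ is the minimum number of colors in a distinguishing coloring of $G$. *)

(* Defs.v *)
From mathcomp Require Import all_boot all_fingroup.
Set Implicit Arguments. Unset Strict Implicit. Unset Printing Implicit Defensive.

Definition simple_graph (T : finType) (e : rel T) : Prop :=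
  symmetric e /\ irreflexive e.

Definition is_aut (T : finType) (e : rel T) (s : {perm T}) : bool :=
  [forall x, forall y, e (s x) (s y) == e x y].

Definition distinguishing (T : finType) (e : rel T) (C : eqType) (c : T -> C)
  : bool :=
  [forall s : {perm T}, (is_aut e s && [forall x, c (s x) == c x]) ==> (s == 1%g)].

Definition has_dist_col (T : finType) (e : rel T) (k : nat) : bool :=
  [exists c : {ffun T -> 'I_k}, distinguishing e c].

Lemma has_dist_col_card (T : finType) (e : rel T) :
  exists k, has_dist_col e k.
Proof.
exists #|T|; apply/existsP; exists [ffun x => enum_rank x].
apply/forallP => s; apply/implyP => /andP [_ /forallP H].
apply/eqP/permP => x; rewrite perm1.
by move: (H x); rewrite !ffunE => /eqP /enum_rank_inj.
Qed.

Definition dist_number (T : finType) (e : rel T) : nat :=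
  ex_minn (has_dist_col_card e).

Definition isomorphic (T1 T2 : finType) (e1 : rel T1) (e2 : rel T2) : Prop :=
  exists f : T1 -> T2, bijective f /\ forall x y, e2 (f x) (f y) = e1 x y.

Definition C4 : rel 'I_4 :=
  fun i j => ((i + 1) %% 4 == j) || ((j + 1) %% 4 == i).
(* 2K_2 on vertices 0..3 with edges {0,1},{2,3}. *)
Definition twoK2 : rel 'I_4 :=
  fun i j => (i != j) && (i./2 == j./2).
Definition Kt1 (t : nat) : rel 'I_t.+1 :=
  fun i j => (i != j) && ((val i == 0) || (val j == 0)).
Definition KtK1 (t : nat) : rel 'I_t.+1 :=
  fun i j => [&& i != j, val i != 0 & val j != 0].
Arguments Kt1 t : clear implicits.
Arguments KtK1 t : clear implicits.

(* Main.v *)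
Require Import Defs.
From mathcomp Require Import all_boot all_fingroup.
From mathcomp Require Import zify.
Set Implicit Arguments. Unset Strict Implicit. Unset Printing Implicit Defensive.

Definition tw (T : finType) (e : rel T) (u v : T) : bool :=
  [forall w, (w != u) ==> (w != v) ==> (e u w == e v w)].

Lemma twP (T : finType) (e : rel T) u v :
  reflect (forall w, w != u -> w != v -> e u w = e v w) (tw e u v).
Proof.
apply: (iffP forallP) => H w.
- by move=> Hu Hv; move: (H w); rewrite Hu Hv => /eqP.
- by apply/implyP => Hu; apply/implyP => Hv; rewrite (H w Hu Hv).
Qed.

Lemma tw_refl (T : finType) (e : rel T) u : @tw T e u u.
Proof. by apply/twP. Qed.

Lemma tw_sym (T : finType) (e : rel T) u v : @tw T e u v -> tw e v u.
Proof. by move/twP=> H; apply/twP => w Hv Hu; rewrite H. Qed.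

Lemma tw_trans (T : finType) (e : rel T) u v w : symmetric e -> tw e u v -> tw e v w -> tw e u w.
Proof.
move=> sym /twP Huv /twP Hvw; apply/twP => z Hzu Hzw.
have [Euv|Nuv] := eqVneq u v; first by subst v; apply: Hvw.
have [Evw|Nvw] := eqVneq v w; first by subst w; apply: Huv.
have [Euw|Nuw] := eqVneq u w; first by rewrite Euw.
have [Ezv|Nzv] := eqVneq z v; last by rewrite Huv // Hvw.
subst z.
have H1 : e v u = e w u by apply: Hvw; rewrite // eq_sym.
have H2 : e u w = e v w by apply: Huv; rewrite // eq_sym.
by rewrite sym H1 sym H2 sym.
Qed.

Lemma isautP (T : finType) (e : rel T) (s : {perm T}) :
  reflect (forall x y, e (s x) (s y) = e x y) (is_aut e s).
Proof.
apply: (iffP forallP) => H x.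
- by move=> y; apply/eqP; move/forallP: (H x).
- by apply/forallP => y; rewrite H.
Qed.

Lemma tw_aut (T : finType) (e : rel T) u v : symmetric e -> irreflexive e ->
  tw e u v -> is_aut e (tperm u v).
Proof.
move=> sym irr /twP H; apply/isautP => x y.
case: tpermP => [->|->|Hxu Hxv]; case: tpermP => [->|->|Hyu Hyv];
  rewrite ?irr //.
- by rewrite H //; apply/eqP.
- by rewrite H //; apply/eqP.
- by rewrite (sym x v) (sym x u) H //; apply/eqP.
- by rewrite (sym x v) (sym x u) H //; apply/eqP.
Qed.


Lemma supp3 (T : finType) (e : rel T) (s : {perm T}) x y z : symmetric e -> is_aut e s ->
  (forall w, w != x -> w != y -> w != z -> s w = w) -> s x = y -> x != y ->
  tw e x y.
Proof.
move=> sym /isautP He Hfix Hsx Nxy; apply/twP => w Hwx Hwy.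
have [Ewz|Nwz] := eqVneq w z; last by rewrite -He Hsx Hfix.
subst w.
have [Hsz|Nsz] := eqVneq (s z) z; first by rewrite -He Hsx Hsz.
have Hsz : s z = x.
  apply/eqP/negPn/negP => Nszx.
  have Nszy : s z != y by rewrite -Hsx (inj_eq (@perm_inj _ s)).
  by move/negP: (Nsz); apply; rewrite -(inj_eq (@perm_inj _ s)) (Hfix (s z)).
have Hsy : s y = z.
  apply/eqP/negPn/negP => Nsyz.
  have Nsyx : s y != x by rewrite -Hsz (inj_eq (@perm_inj _ s)) eq_sym.
  have Nsyy : s y != y by rewrite -{2}Hsx (inj_eq (@perm_inj _ s)) eq_sym.
  by move/negP: (Nsyy); apply; rewrite -(inj_eq (@perm_inj _ s)) (Hfix (s y)).
by rewrite -(He y z) Hsy Hsz sym.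
Qed.

Definition colf (T : finType) (f : T -> T) k (Hk : #|f @: [set: T]| <= k) :
  {ffun T -> 'I_k} :=
  [ffun x => widen_ord Hk (enum_rank_in (imset_f f (in_setT x)) (f x))].

Lemma colfE (T : finType) (f : T -> T) k (Hk : #|f @: [set: T]| <= k) x y :
  colf Hk x = colf Hk y -> f x = f y.
Proof.
rewrite /colf !ffunE => /(congr1 val) /= H.
have Ex := enum_rankK_in (imset_f f (in_setT x)) (imset_f f (in_setT x)).
have Ey := enum_rankK_in (imset_f f (in_setT y)) (imset_f f (in_setT y)).
rewrite -Ex -Ey; congr enum_val; exact: val_inj H.
Qed.

Lemma col_lower (T : finType) (e : rel T) (f : T -> T) k :
  #|f @: [set: T]| <= k -> ~~ has_dist_col e k ->
  exists s : {perm T}, [/\ is_aut e s, s != 1%g & forall x, f (s x) = f x].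
Proof.
move=> Hk /existsPn /(_ (colf Hk)) /forallPn [s].
rewrite negb_imply => /andP [/andP [Ha /forallP Hc] Hs].
by exists s; split => // x; apply: (colfE (Hk:=Hk)); apply/eqP; apply: Hc.
Qed.

Lemma col_upper (T : finType) (e : rel T) (f : T -> T) k :
  #|f @: [set: T]| <= k ->
  (forall s : {perm T}, is_aut e s -> (forall x, f (s x) = f x) -> s = 1%g) ->
  has_dist_col e k.
Proof.
move=> Hk H; apply/existsP; exists (colf Hk); apply/forallP => s.
apply/implyP => /andP [Ha /forallP Hc]; apply/eqP; apply: H => // x.
by apply: (colfE (Hk:=Hk)); apply/eqP; apply: Hc.
Qed.

Lemma has_dist_col_mono (T : finType) (e : rel T) k k' :
  k <= k' -> has_dist_col e k -> has_dist_col e k'.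
Proof.
move=> Hk /existsP [c Hc]; apply/existsP; exists [ffun x => widen_ord Hk (c x)].
apply/forallP => s; apply/implyP => /andP [Ha /forallP Hcs].
move/forallP: Hc => /(_ s) /implyP; apply; rewrite Ha /=; apply/forallP => x.
move: (Hcs x); rewrite !ffunE => /eqP /(congr1 val) /= H.
by apply/eqP/val_inj.
Qed.

Lemma pigeon (T : finType) (e : rel T) (S : {set T}) k :
  symmetric e -> irreflexive e ->
  (forall x y, x \in S -> y \in S -> tw e x y) -> k < #|S| -> ~~ has_dist_col e k.
Proof.
move=> sym irr HS Hk; apply/existsPn => c; apply/forallPn.
have : ~~ [forall x in S, forall y in S, (c x == c y) ==> (x == y)].
  apply/negP => /forallP H.
  have Hinj : {in S &, injective c}.
    move=> x y Hx Hy Hxy; move: (H x); rewrite Hx /= => /forallP /(_ y).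
    by rewrite Hy Hxy eqxx /= => /eqP.
  move: (card_in_imset Hinj) => Hc.
  have : #|[set c x | x in S]| <= k by apply: (leq_trans (max_card _)); rewrite card_ord.
  by rewrite Hc leqNgt Hk.
case/forallPn => x; rewrite negb_imply => /andP [Hx /forallPn [y]].
rewrite negb_imply => /andP [Hy]; rewrite negb_imply => /andP [/eqP Hcxy Nxy].
exists (tperm x y); rewrite negb_imply; apply/andP; split.
  rewrite tw_aut ?HS //=; apply/forallP => z.
  by case: tpermP => [->|->|]; rewrite ?Hcxy.
apply/eqP => /(congr1 (fun s : {perm T} => s x)); rewrite tpermL perm1.
by move/eqP; rewrite eq_sym (negbTE Nxy).
Qed.

Lemma perm_neq1 (T : finType) (s : {perm T}) : s != 1%g -> exists p, s p != p.
Proof.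
move=> Hs; apply/existsP; apply: contraR Hs => /existsPn H.
by apply/eqP/permP => x; rewrite perm1; apply/eqP; move: (H x); rewrite negbK.
Qed.

Lemma upper_pair (T : finType) (e : rel T) u v : symmetric e ->
  u != v -> ~~ tw e u v -> has_dist_col e #|T|.-1.
Proof.
move=> sym Nuv Ntw.
pose f := fun x => if x == v then u else x.
have Hk : #|f @: [set: T]| <= #|T|.-1.
  rewrite -(cardsC1 v); apply: subset_leq_card; apply/subsetP => y /imsetP [x _ ->].
  by rewrite !inE /f; case: ifP => // /negbT.
apply: (col_upper Hk) => s Ha Hf.
have Hfix : forall w, w != u -> w != v -> s w = w.
  move=> w Hwu Hwv; move: (Hf w); rewrite /f (negbTE Hwv).
  by case: eqP => // _ /eqP; rewrite eq_sym (negbTE Hwu).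
have Hsu : s u = u.
  have [Esu|Nsu] := eqVneq (s u) v.
    case/negP: Ntw; apply: (supp3 (z:=u) sym Ha _ Esu Nuv) => w H1 H2 _; exact: Hfix.
  by move: (Hf u); rewrite /f (negbTE Nuv) (negbTE Nsu).
apply/permP => x; rewrite perm1.
have [->|Nxu] := eqVneq x u => //.
have [Exv|Nxv] := eqVneq x v; last exact: Hfix.
subst x; have [//|Nsv] := eqVneq (s v) v.
move: (Hf v); rewrite /f eqxx (negbTE Nsv) => Hsv.
have : s v = s u by rewrite Hsv Hsu.
by move/perm_inj => Evu; rewrite Evu eqxx in Nuv.
Qed.

Lemma card_img2 (T : finType) (f : T -> T) b c :
  b != c -> (forall x, f x != b /\ f x != c) -> #|f @: [set: T]| <= #|T| - 2.
Proof.
move=> Nbc H; have := cardsC [set b; c]; rewrite cards2 Nbc => HC.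
have : #|f @: [set: T]| <= #|~: [set b; c]|.
  apply: subset_leq_card; apply/subsetP => y /imsetP [x _ ->].
  by rewrite !inE negb_or; case: (H x) => -> ->.
lia.
Qed.

Lemma lower_triple (T : finType) (e : rel T) a b x : symmetric e ->
  ~~ has_dist_col e (#|T| - 2) -> a != b -> a != x -> b != x ->
  [|| tw e a b, tw e a x | tw e b x].
Proof.
move=> sym Hd Nab Nax Nbx.
pose f := fun w => if w \in [set a; b; x] then a else w.
have Hk : #|f @: [set: T]| <= #|T| - 2.
  apply: (card_img2 Nbx) => w; rewrite /f; case: ifP => [_|].
    by split.
  by move/negbT; rewrite !inE => H; split; apply: contra H => /eqP ->; rewrite eqxx ?orbT.
have [s [Ha Hs1 Hf]] := col_lower Hk Hd.
have Hfix : forall w, w != a -> w != b -> w != x -> s w = w.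
  move=> w H1 H2 H3; move: (Hf w); rewrite /f.
  have -> : (w \in [set a; b; x]) = false by rewrite !inE (negbTE H1) (negbTE H2) (negbTE H3).
  case: ifP => // _ /eqP; rewrite eq_sym (negbTE H1) //.
have [p Hp] := perm_neq1 Hs1.
have Pin : p \in [set a; b; x].
  apply: contraR Hp => Hn; apply/eqP; apply: Hfix; apply/eqP => Ep;
  by rewrite Ep !inE eqxx ?orbT in Hn.
have Sin : s p \in [set a; b; x].
  move: (Hf p); rewrite /f Pin; case: ifP => [//|/negbT Hn Hsa]; by rewrite Hsa !inE eqxx in Hn.
move: Pin Sin Hp; rewrite !inE; case/orP => [/orP [] |] /eqP ->; case/orP => [/orP [] |] /eqP Hsp; rewrite Hsp ?eqxx // => Nq.
- have Ht : tw e a b.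
    apply: (supp3 (z:=x) sym Ha _ Hsp); last by rewrite eq_sym.
    by move=> w H1 H2 H3; apply: Hfix.
  by rewrite Ht.
- have Ht : tw e a x.
    apply: (supp3 (z:=b) sym Ha _ Hsp); last by rewrite eq_sym.
    by move=> w H1 H2 H3; apply: Hfix.
  by rewrite Ht orbT.
- have Ht : tw e b a.
    apply: (supp3 (z:=x) sym Ha _ Hsp); last by rewrite eq_sym.
    by move=> w H1 H2 H3; apply: Hfix.
  by rewrite (tw_sym Ht).
- have Ht : tw e b x.
    apply: (supp3 (z:=a) sym Ha _ Hsp); last by rewrite eq_sym.
    by move=> w H1 H2 H3; apply: Hfix.
  by rewrite Ht !orbT.
- have Ht : tw e x a.
    apply: (supp3 (z:=b) sym Ha _ Hsp); last by rewrite eq_sym.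
    by move=> w H1 H2 H3; apply: Hfix.
  by rewrite (tw_sym Ht) orbT.
- have Ht : tw e x b.
    apply: (supp3 (z:=a) sym Ha _ Hsp); last by rewrite eq_sym.
    by move=> w H1 H2 H3; apply: Hfix.
  by rewrite (tw_sym Ht) !orbT.
Qed.

Lemma half (T : finType) (e : rel T) (s : {perm T}) a b c d :
  symmetric e -> is_aut e s -> s != 1%g -> a != b -> c != d ->
  (s a == a) || (s a == b) -> (s b == a) || (s b == b) ->
  (s c == c) || (s c == d) -> (s d == c) || (s d == d) ->
  (forall w, w != a -> w != b -> w != c -> w != d -> s w = w) ->
  ~~ tw e c d -> s a = b.
Proof.
move=> sym Ha Hs1 Nab Ncd Hsa Hsb Hsc Hsd Hfix Ntw.
case/orP: Hsa => /eqP Esa //.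
have Esb : s b = b.
  case/orP: Hsb => /eqP // Esb.
  have : s b = s a by rewrite Esb Esa.
  by move/perm_inj => Eba; rewrite Eba eqxx in Nab.
have Hfix' : forall w, w != c -> w != d -> s w = w.
  move=> w H1 H2; have [->//|Nwa] := eqVneq w a; have [->//|Nwb] := eqVneq w b.
  exact: Hfix.
case/orP: Hsc => /eqP Esc.
  have Esd : s d = d.
    case/orP: Hsd => /eqP // Esd.
    have : s d = s c by rewrite Esd Esc.
    by move/perm_inj => Edc; rewrite Edc eqxx in Ncd.
  case/negP: Hs1; apply/eqP/permP => w; rewrite perm1.
  have [->//|Nwc] := eqVneq w c; have [->//|Nwd] := eqVneq w d.
  exact: Hfix'.
case/negP: Ntw; apply: (supp3 (z:=c) sym Ha _ Esc Ncd) => w H1 H2 _; exact: Hfix'.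
Qed.

Lemma lower_pairs (T : finType) (e : rel T) a b c d : symmetric e ->
  ~~ has_dist_col e (#|T| - 2) ->
  a != b -> a != c -> a != d -> b != c -> b != d -> c != d ->
  ~~ tw e a b -> ~~ tw e c d ->
  exists s : {perm T}, [/\ is_aut e s, s a = b, s c = d &
    forall w, w != a -> w != b -> w != c -> w != d -> s w = w].
Proof.
move=> sym Hd Nab Nac Nad Nbc Nbd Ncd Ntab Ntcd.
pose f := fun w => if (w == a) || (w == b) then a
                   else if (w == c) || (w == d) then c else w.
have Hk : #|f @: [set: T]| <= #|T| - 2.
  apply: (card_img2 Nbd) => w; rewrite /f.
  case: ifP => [_|/negbT Hab']; first by split.
  case: ifP => [_|/negbT Hcd']; first by split; rewrite // eq_sym.
  by split; [apply: contra Hab' => /eqP -> | apply: contra Hcd' => /eqP ->]; rewrite eqxx orbT.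
have [s [Ha Hs1 Hf]] := col_lower Hk Hd.
have Hfix : forall w, w != a -> w != b -> w != c -> w != d -> s w = w.
  move=> w H1 H2 H3 H4; move: (Hf w); rewrite /f (negbTE H1) (negbTE H2) (negbTE H3) (negbTE H4) /=.
  case: ifP => _; first by move/eqP; rewrite eq_sym (negbTE H1).
  case: ifP => _ //; by move/eqP; rewrite eq_sym (negbTE H3).
have Hab : forall p, (p == a) || (p == b) -> (s p == a) || (s p == b).
  move=> p Hp; move: (Hf p); rewrite /f Hp.
  case: ifP => // /negbT H1; case: ifP => [_ E|_ Hsa]; first by rewrite E eqxx in Nac.
  by rewrite Hsa eqxx in H1.
have Hcd : forall p, (p == c) || (p == d) -> (s p == c) || (s p == d).
  move=> p Hp.
  have Hp' : (p == a) || (p == b) = false.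
    by case/orP: Hp => /eqP ->; apply/negbTE; rewrite negb_or; apply/andP; split; rewrite eq_sym.
  move: (Hf p); rewrite /f Hp' Hp.
  case: ifP => [_ E|_]; first by rewrite E eqxx in Nac.
  by case: ifP => // /negbT H1 Hsc; rewrite Hsc eqxx in H1.
exists s; split => //.
- apply: (half (c:=c) (d:=d) sym Ha Hs1 Nab Ncd) => //.
  + by apply: Hab; rewrite eqxx.
  + by apply: Hab; rewrite eqxx orbT.
  + by apply: Hcd; rewrite eqxx.
  + by apply: Hcd; rewrite eqxx orbT.
- apply: (half (c:=a) (d:=b) sym Ha Hs1 Ncd Nab) => //.
  + by apply: Hcd; rewrite eqxx.
  + by apply: Hcd; rewrite eqxx orbT.
  + by apply: Hab; rewrite eqxx.
  + by apply: Hab; rewrite eqxx orbT.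
  + by move=> w H1 H2 H3 H4; apply: Hfix.
Qed.

Definition side4 (T : finType) (p p' x : T) := (x == p) || (x == p').

Definition S4 (T : finType) (e : rel T) (p p' q q' : T) (x0 z : bool) : Prop :=
  [/\ [&& p != p', p != q, p != q', p' != q, p' != q' & q != q'],
      forall x, [|| x == p, x == p', x == q | x == q'] &
      forall x y, e x y = (x != y) && (if side4 p p' x == side4 p p' y then x0 else z)].

Lemma S4_swap (T : finType) (e : rel T) p p' q q' x0 z :
  S4 e p p' q q' x0 z -> S4 e p p' q' q x0 z.
Proof.
case=> /and5P [H1 H2 H3 H4 /andP [H5 H6]] Hc He; split => //.
  rewrite H1 H3 H2 /= H5 /=; apply/andP; split; [exact: H4 | by rewrite eq_sym].
by move=> x; case/or4P: (Hc x) => ->; rewrite ?orbT.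
Qed.

Lemma S4_tw (T : finType) (e : rel T) p p' q q' x0 z x y :
  S4 e p p' q q' x0 z -> side4 p p' x = side4 p p' y -> tw e x y.
Proof.
case=> _ _ He Hs; apply/twP => w Hwx Hwy.
by rewrite !He Hs (eq_sym x w) (eq_sym y w) Hwx Hwy.
Qed.

Lemma S4_ntw (T : finType) (e : rel T) p p' q q' x0 z :
  S4 e p p' q q' x0 z -> x0 != z -> ~~ tw e p q.
Proof.
move=> HS Nxz; case: HS => /and5P [H1 H2 H3 H4 /andP [H5 H6]] Hc He.
apply/negP => /twP H.
have : e p p' = e q p' by apply: H; rewrite // eq_sym.
rewrite !He /side4 !eqxx orbT (eq_sym q p) (negbTE H2) (eq_sym q p') (negbTE H4) /=.
move=> E; move: Nxz; rewrite -E; move: H1; rewrite /negb.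
by case: (p == p') => //= _; rewrite eqxx.
Qed.

Lemma S4_card (T : finType) (e : rel T) p p' q q' x0 z :
  S4 e p p' q q' x0 z -> #|T| = 4.
Proof.
case=> /and5P [H1 H2 H3 H4 /andP [H5 H6]] Hc _.
have -> : #|T| = #|[:: p; p'; q; q']|.
  by apply: eq_card => x; rewrite !inE; move: (Hc x) => ->.
apply/card_uniqP; rewrite /= !inE !negb_or.
by rewrite H1 H2 H3 H4 H5 H6.
Qed.

Lemma S4_swap_aut (T : finType) (e : rel T) p p' q q' x0 z :
  S4 e p p' q q' x0 z ->
  let s := (tperm p q * tperm p' q')%g in
  [/\ is_aut e s, s p = q, s p' = q', s q = p & s q' = p'].
Proof.
move=> HS; case: (HS) => /and5P [H1 H2 H3 H4 /andP [H5 H6]] Hc He s.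
have H1' : p' != p by rewrite eq_sym.
have H3' : q' != p by rewrite eq_sym.
have H4' : q != p' by rewrite eq_sym.
have H6' : q' != q by rewrite eq_sym.
have Sp : s p = q by rewrite /s permM tpermL (tpermD H4 H6').
have Sp' : s p' = q' by rewrite /s permM (tpermD H1 H4') tpermL.
have Sq : s q = p by rewrite /s permM tpermR (tpermD H1' H3').
have Sq' : s q' = p' by rewrite /s permM (tpermD H3 H6) tpermR.
split => //; apply/isautP => x y.
have Hside : forall w, side4 p p' (s w) = ~~ side4 p p' w.
  have Fq : side4 p p' q = false.
    by rewrite /side4 (eq_sym q p) (negbTE H2) (eq_sym q p') (negbTE H4).
  have Fq' : side4 p p' q' = false.
    by rewrite /side4 (eq_sym q' p) (negbTE H3) (eq_sym q' p') (negbTE H5).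
  have Tp : side4 p p' p = true by rewrite /side4 eqxx.
  have Tp' : side4 p p' p' = true by rewrite /side4 eqxx orbT.
  by move=> w; case/or4P: (Hc w) => /eqP ->; rewrite ?Sp ?Sp' ?Sq ?Sq' ?Fq ?Fq' ?Tp ?Tp'.
rewrite !He (inj_eq (@perm_inj _ s)) !Hside.
by case: (side4 p p' x); case: (side4 p p' y).
Qed.

Lemma ord2_cases (x y w : 'I_2) : x != y -> (w == x) || (w == y).
Proof.
case: x => [[|[|x]] Hx] //; case: y => [[|[|y]] Hy] //; case: w => [[|[|w]] Hw] //.
Qed.

Lemma S4_low (T : finType) (e : rel T) p p' q q' x0 z :
  symmetric e -> irreflexive e -> S4 e p p' q q' x0 z -> ~~ has_dist_col e 2.
Proof.
move=> sym irr HS; case: (HS) => /and5P [H1 H2 H3 H4 /andP [H5 H6]] Hc He.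
apply/existsPn => c; apply/forallPn.
have Tw : forall x y, side4 p p' x = side4 p p' y -> c x = c y -> x != y ->
    exists s : {perm T}, ~~ ((is_aut e s && [forall w, c (s w) == c w]) ==> (s == 1%g)).
  move=> x y Hs Hcxy Nxy; exists (tperm x y); rewrite negb_imply; apply/andP; split.
    rewrite tw_aut //; last exact: (S4_tw HS).
    by apply/forallP => w; case: tpermP => [->|->|]; rewrite ?Hcxy.
  apply/eqP => /(congr1 (fun s : {perm T} => s x)); rewrite tpermL perm1.
  by move/eqP; rewrite eq_sym (negbTE Nxy).
have [Epp|Npp] := eqVneq (c p) (c p').
  by apply: Tw Epp H1; rewrite /side4 !eqxx orbT.
have [Eqq|Nqq] := eqVneq (c q) (c q').
  apply: Tw Eqq H6.
  by rewrite /side4 (eq_sym q p) (negbTE H2) (eq_sym q p') (negbTE H4)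
    (eq_sym q' p) (negbTE H3) (eq_sym q' p') (negbTE H5).
have Gen : forall r r', S4 e p p' r r' x0 z -> c r = c p -> c r' = c p' ->
    exists s : {perm T}, ~~ ((is_aut e s && [forall w, c (s w) == c w]) ==> (s == 1%g)).
  move=> r r' HS' Cr Cr'.
  have [Ha Sp Sp' Sr Sr'] := S4_swap_aut HS'.
  case: (HS') => /and5P [_ G2 _ _ _] Hc' _.
  exists (tperm p r * tperm p' r')%g; rewrite negb_imply Ha /=; apply/andP; split.
    by apply/forallP => w; case/or4P: (Hc' w) => /eqP ->;
      rewrite ?Sp ?Sp' ?Sr ?Sr' ?Cr ?Cr'.
  apply/eqP => /(congr1 (fun s : {perm T} => s p)); rewrite Sp perm1 => E.
  by rewrite E eqxx in G2.
case/orP: (ord2_cases (c q) Npp) => /eqP Cq.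
  apply: (Gen q q' HS Cq).
  by case/orP: (ord2_cases (c q') Npp) => /eqP // Cq'; rewrite Cq' -Cq eqxx in Nqq.
apply: (Gen q' q (S4_swap HS)).
  by case/orP: (ord2_cases (c q') Npp) => /eqP // Cq'; rewrite Cq' -Cq eqxx in Nqq.
done.
Qed.

Lemma iso_inv (T1 T2 : finType) (e1 : rel T1) (e2 : rel T2) :
  isomorphic e1 e2 -> exists g : T2 -> T1, bijective g /\ forall i j, e1 (g i) (g j) = e2 i j.
Proof. case=> f [[g fg gf] Hf]; exists g; split; first by exists f. by move=> i j; rewrite -Hf !gf. Qed.

Lemma iso_of_bij (T1 T2 : finType) (e1 : rel T1) (e2 : rel T2) (g : T2 -> T1) :
  bijective g -> (forall i j, e1 (g i) (g j) = e2 i j) -> isomorphic e1 e2.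
Proof. case=> f gf fg He; exists f; split; first by exists g. by move=> x y; rewrite -He !fg. Qed.

Lemma dist_eq (T : finType) (e : rel T) :
  has_dist_col e #|T|.-1 -> ~~ has_dist_col e (#|T| - 2) -> dist_number e + 1 = #|T|.
Proof.
move=> Hup Hlow; rewrite /dist_number; case: ex_minnP => m Hm Hmin.
have H1 := Hmin _ Hup.
have Hn : #|T|.-1 != #|T| - 2 by apply: contraNneq Hlow => E; rewrite -E.
case: (leqP #|T|.-1 m) => H2; first lia.
have : has_dist_col e (#|T| - 2) by apply: (has_dist_col_mono _ Hm); lia.
by rewrite (negbTE Hlow).
Qed.

Lemma dist_facts (T : finType) (e : rel T) :
  dist_number e + 1 = #|T| ->
  has_dist_col e #|T|.-1 /\ (forall k, k < #|T|.-1 -> ~~ has_dist_col e k).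
Proof.
rewrite /dist_number; case: ex_minnP => m Hm Hmin E.
have -> : #|T|.-1 = m by lia.
by split=> // k Hk; apply/negP => /Hmin; lia.
Qed.

Lemma L_in (T : finType) (e : rel T) (P : pred T) p q r s : symmetric e ->
  (forall x y, P x -> P y -> tw e x y) -> P p -> P q -> P r -> P s ->
  p != q -> r != s -> e p q = e r s.
Proof.
move=> sym HP Pp Pq Pr Ps Npq Nrs.
have [Erq|Nrq] := eqVneq r q.
  subst r; rewrite (sym q s); apply/(twP _ _ _ (HP _ _ Pp Ps)) => //.
  by rewrite eq_sym.
have Nqp : q != p by rewrite eq_sym.
have Nqr : q != r by rewrite eq_sym.
rewrite (twP _ _ _ (HP _ _ Pp Pr) q Nqp Nqr).
by rewrite (sym r q) (twP _ _ _ (HP _ _ Pq Ps) r Nrq Nrs) sym.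
Qed.

Lemma all_tw_false (T : finType) (e : rel T) (x : T) : symmetric e -> irreflexive e ->
  (forall x y, tw e x y) -> ~~ has_dist_col e #|T|.-1.
Proof.
move=> sym irr H; apply: (pigeon (S := [set: T])) => //; rewrite cardsT.
have : 0 < #|T| by apply/card_gt0P; exists x.
lia.
Qed.

Lemma star_iso (T : finType) (e : rel T) v a b : symmetric e -> irreflexive e ->
  has_dist_col e #|T|.-1 ->
  (forall x y, x != v -> y != v -> tw e x y) -> a != v -> b != v -> a != b ->
  (exists2 t, 2 <= t & isomorphic e (Kt1 t)) \/
  (exists2 t, 2 <= t & isomorphic e (KtK1 t)).
Proof.
move=> sym irr Hup Htw Hav Hbv Nab.
have Hc0 : forall s, s != v -> e v s = e v a.
  move=> s Hs; rewrite (sym v s) (sym v a).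
  by apply: (twP _ _ _ (Htw _ _ Hs Hav)); rewrite eq_sym.
have Hc1 : forall s s', s != v -> s' != v -> s != s' -> e s s' = e a b.
  move=> s s' Hs Hs' Nss'.
  exact: (L_in (P := fun x => x != v) sym Htw Hs Hs' Hav Hbv Nss' Nab).
have H3 : 3 <= #|T|.
  have : uniq [:: v; a; b].
    rewrite /= !inE negb_or andbT Nab andbT.
    by apply/andP; split; rewrite eq_sym.
  move/card_uniqP => Hc; apply: leq_trans (max_card (mem [:: v; a; b])).
  by rewrite Hc.
have [Ec|Nc] := eqVneq (e v a) (e a b).
  have Hv : forall y, y != v -> tw e v y.
    move=> y Hy; apply/twP => w Hwv Hwy.
    have Nyw : y != w by rewrite eq_sym.
    by rewrite Hc0 // (Hc1 _ _ Hy Hwv Nyw) Ec.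
  have Hall : forall x y, tw e x y.
    move=> x y; have [->|Hx] := eqVneq x v; have [->|Hy] := eqVneq y v.
    - exact: tw_refl.
    - exact: Hv.
    - exact: tw_sym (Hv _ Hx).
    - exact: Htw.
  by move: (all_tw_false v sym irr Hall); rewrite Hup.
have Hn : (#|T|.-1).+1 = #|T| by lia.
pose h (i : 'I_(#|T|.-1).+1) : T := enum_val (cast_ord Hn i).
pose g i := tperm (h ord0) v (h i).
have ginj : injective g.
  by move=> i j /perm_inj /enum_val_inj /cast_ord_inj.
have gbij : bijective g.
  by apply: (inj_card_bij ginj); rewrite card_ord Hn.
have g0 : g ord0 = v by rewrite /g tpermL.
have gv : forall i, (g i == v) = (i == ord0) by move=> i; rewrite -g0 (inj_eq ginj).
have ev : forall i : 'I_(#|T|.-1).+1, (i == ord0) = (val i == 0) by [].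
have key : forall i j, e (g i) (g j) =
    (i != j) && (if (val i == 0) || (val j == 0) then e v a else e a b).
  move=> i j; have [<-|Nij] := eqVneq i j; first by rewrite irr.
  have Ng : g i != g j by rewrite (inj_eq ginj).
  rewrite -!ev /=; have [Ei|Ni] := eqVneq i ord0.
    by rewrite Ei g0 in Ng *; rewrite Hc0 // eq_sym.
  have [Ej|Nj] := eqVneq j ord0.
    by rewrite Ej g0 in Ng *; rewrite sym Hc0 // gv.
  by rewrite Hc1 ?gv.
have Ht : 2 <= #|T|.-1 by lia.
case: (boolP (e v a)) Nc => Hva Nc.
  have Hab : e a b = false by move: Nc; case: (e a b).
  left; exists #|T|.-1 => //; apply: (iso_of_bij gbij) => i j.
  rewrite key Hva Hab /Kt1.
  by case: (val i == 0); case: (val j == 0); rewrite /= ?andbT ?andbF.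
have Hab : e a b = true by move: Nc; case: (e a b).
right; exists #|T|.-1 => //; apply: (iso_of_bij gbij) => i j.
rewrite key (negbTE Hva) Hab /KtK1.
by case: (val i == 0); case: (val j == 0); rewrite /= ?andbT ?andbF.
Qed.

Ltac s4neq H1 H2 H3 H4 H5 H6 :=
  let F1 := fresh "F" in let F2 := fresh "F" in let F3 := fresh "F" in
  let F4 := fresh "F" in let F5 := fresh "F" in let F6 := fresh "F" in
  let G1 := fresh "G" in let G2 := fresh "G" in let G3 := fresh "G" in
  let G4 := fresh "G" in let G5 := fresh "G" in let G6 := fresh "G" in
  have F1 := negbTE H1; have F2 := negbTE H2; have F3 := negbTE H3;
  have F4 := negbTE H4; have F5 := negbTE H5; have F6 := negbTE H6;
  have G1 := F1; rewrite eq_sym in G1; have G2 := F2; rewrite eq_sym in G2;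
  have G3 := F3; rewrite eq_sym in G3; have G4 := F4; rewrite eq_sym in G4;
  have G5 := F5; rewrite eq_sym in G5; have G6 := F6; rewrite eq_sym in G6.

Lemma S4_iso (T : finType) (e : rel T) p p' q q' x0 z :
  S4 e p p' q q' x0 z -> x0 != z -> isomorphic e C4 \/ isomorphic e twoK2.
Proof.
move=> HS Nxz; have Hc4 := S4_card HS.
case: (HS) => /and5P [H1 H2 H3 H4 /andP [H5 H6]] Hc He.
s4neq H1 H2 H3 H4 H5 H6; clear HS.
case: x0 z Nxz He => [] [] // _ He.
- right.
  pose g (i : 'I_4) := nth p [:: p; p'; q; q'] i.
  have ginj : injective g.
    move=> i j; case: i => [[|[|[|[|i]]]] Hi] //; case: j => [[|[|[|[|j]]]] Hj] //= E;
    by [apply/val_inj | move/eqP: E; rewrite ?F ?F0 ?F1 ?F2 ?F3 ?F4 ?G ?G0 ?G1 ?G2 ?G3 ?G4].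
  apply: (iso_of_bij (g := g)); first by apply: (inj_card_bij ginj); rewrite card_ord Hc4.
  move=> i j; rewrite He /side4.
  case: i => [[|[|[|[|i]]]] Hi] //; case: j => [[|[|[|[|j]]]] Hj] //=;
  by rewrite ?eqxx ?F ?F0 ?F1 ?F2 ?F3 ?F4 ?G ?G0 ?G1 ?G2 ?G3 ?G4.
- left.
  pose g (i : 'I_4) := nth p [:: p; q; p'; q'] i.
  have ginj : injective g.
    move=> i j; case: i => [[|[|[|[|i]]]] Hi] //; case: j => [[|[|[|[|j]]]] Hj] //= E;
    by [apply/val_inj | move/eqP: E; rewrite ?F ?F0 ?F1 ?F2 ?F3 ?F4 ?G ?G0 ?G1 ?G2 ?G3 ?G4].
  apply: (iso_of_bij (g := g)); first by apply: (inj_card_bij ginj); rewrite card_ord Hc4.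
  move=> i j; rewrite He /side4.
  case: i => [[|[|[|[|i]]]] Hi] //; case: j => [[|[|[|[|j]]]] Hj] //=;
  by rewrite ?eqxx ?F ?F0 ?F1 ?F2 ?F3 ?F4 ?G ?G0 ?G1 ?G2 ?G3 ?G4.
Qed.

Lemma iso4_S4 (T : finType) (e : rel T) (X : rel 'I_4) (i0 i1 j0 j1 : 'I_4) x0 z :
  [&& i0 != i1, i0 != j0, i0 != j1, i1 != j0, i1 != j1 & j0 != j1] ->
  (forall i, [|| i == i0, i == i1, i == j0 | i == j1]) ->
  (forall i j, X i j = (i != j) &&
     (if ((i == i0) || (i == i1)) == ((j == i0) || (j == i1)) then x0 else z)) ->
  isomorphic e X -> exists p p' q q', S4 e p p' q q' x0 z.
Proof.
move=> Hd Hcov HX /iso_inv [g [gbij Hg]].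
have ginj := bij_inj gbij; case: gbij => f gf fg.
exists (g i0), (g i1), (g j0), (g j1); split.
- by rewrite !(inj_eq ginj).
- by move=> x; rewrite -(fg x) !(inj_eq ginj).
- by move=> x y; rewrite -(fg x) -(fg y) Hg HX /side4 !(inj_eq ginj).
Qed.

Lemma C4_S4 (T : finType) (e : rel T) :
  isomorphic e C4 -> exists p p' q q', S4 e p p' q q' false true.
Proof.
apply: (iso4_S4 (i0 := @Ordinal 4 0 isT) (i1 := @Ordinal 4 2 isT)
                (j0 := @Ordinal 4 1 isT) (j1 := @Ordinal 4 3 isT)) => //.
- by case => [[|[|[|[|i]]]] Hi].
- by case => [[|[|[|[|i]]]] Hi] //; case => [[|[|[|[|j]]]] Hj].
Qed.

Lemma K2_S4 (T : finType) (e : rel T) :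
  isomorphic e twoK2 -> exists p p' q q', S4 e p p' q q' true false.
Proof.
apply: (iso4_S4 (i0 := @Ordinal 4 0 isT) (i1 := @Ordinal 4 1 isT)
                (j0 := @Ordinal 4 2 isT) (j1 := @Ordinal 4 3 isT)) => //.
- by case => [[|[|[|[|i]]]] Hi].
- by case => [[|[|[|[|i]]]] Hi] //; case => [[|[|[|[|j]]]] Hj].
Qed.

Lemma S4_dist (T : finType) (e : rel T) p p' q q' x0 z :
  symmetric e -> irreflexive e -> S4 e p p' q q' x0 z -> x0 != z ->
  dist_number e + 1 = #|T|.
Proof.
move=> sym irr HS Nxz; apply: dist_eq.
  case: (HS) => /and5P [_ H2 _ _ _] _ _.
  exact: (upper_pair sym H2 (S4_ntw HS Nxz)).
by rewrite (S4_card HS); exact: S4_low HS.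
Qed.

Lemma star_back (T : finType) (e : rel T) t (X : rel 'I_t.+1) :
  symmetric e -> irreflexive e -> 2 <= t ->
  (forall i j k, i != ord0 -> j != ord0 -> k != i -> k != j -> X i k = X j k) ->
  (exists i1 i2 : 'I_t.+1, [&& ord0 != i1, ord0 != i2, i1 != i2 & X ord0 i2 != X i1 i2]) ->
  isomorphic e X -> dist_number e + 1 = #|T|.
Proof.
move=> sym irr Ht HX [i1 [i2 /and4P [N01 N02 N12 Nx]]] /iso_inv [g [gbij Hg]].
have ginj := bij_inj gbij; have Hcard := bij_eq_card gbij.
rewrite card_ord in Hcard.
case: gbij => f gf fg.
apply: dist_eq.
  apply: (upper_pair (u := g ord0) (v := g i1) sym); first by rewrite (inj_eq ginj).
  apply/negP => /twP H.
  have : e (g ord0) (g i2) = e (g i1) (g i2) by apply: H; rewrite (inj_eq ginj) eq_sym.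
  by rewrite !Hg => E; rewrite E eqxx in Nx.
apply: (pigeon (S := [set~ g ord0])) => //; last by rewrite cardsC1; lia.
move=> x y; rewrite !inE -(fg x) -(fg y) !(inj_eq ginj) => Hx Hy.
apply/twP => w; rewrite -(fg w) !(inj_eq ginj) !Hg => Hwx Hwy.
exact: HX.
Qed.

Lemma Kt1_back (T : finType) (e : rel T) t :
  symmetric e -> irreflexive e -> 2 <= t -> isomorphic e (Kt1 t) ->
  dist_number e + 1 = #|T|.
Proof.
move=> sym irr Ht; apply: star_back => //.
  move=> i j k Hi Hj Hki Hkj.
  have vi : (val i == 0) = false := negbTE Hi.
  have vj : (val j == 0) = false := negbTE Hj.
  by rewrite /Kt1 vi vj (eq_sym i k) (eq_sym j k) Hki Hkj.
by exists (Ordinal (ltnW Ht : 1 < t.+1)), (Ordinal (Ht : 2 < t.+1)).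
Qed.

Lemma KtK1_back (T : finType) (e : rel T) t :
  symmetric e -> irreflexive e -> 2 <= t -> isomorphic e (KtK1 t) ->
  dist_number e + 1 = #|T|.
Proof.
move=> sym irr Ht; apply: star_back => //.
  move=> i j k Hi Hj Hki Hkj.
  have vi : (val i != 0) := Hi.
  have vj : (val j != 0) := Hj.
  by rewrite /KtK1 vi vj (eq_sym i k) (eq_sym j k) Hki Hkj.
by exists (Ordinal (ltnW Ht : 1 < t.+1)), (Ordinal (Ht : 2 < t.+1)).
Qed.

Theorem theorem4p2 (T : finType) (e : rel T) :
  simple_graph e ->
  ((dist_number e + 1)%N = #|T| <->
   [\/ isomorphic e C4,
       isomorphic e twoK2,
       exists2 t, (2 <= t)%N & isomorphic e (Kt1 t)
     | exists2 t, (2 <= t)%N & isomorphic e (KtK1 t)]).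
Proof.
case=> sym irr; split; last first.
  case=> [HC | HK | [t Ht HT] | [t Ht HT]].
  - by have [p [p' [q [q' HS]]]] := C4_S4 HC; exact: S4_dist sym irr HS isT.
  - by have [p [p' [q [q' HS]]]] := K2_S4 HK; exact: S4_dist sym irr HS isT.
  - exact: Kt1_back sym irr Ht HT.
  - exact: KtK1_back sym irr Ht HT.
move=> HD; have [Hup Hlow'] := dist_facts HD.
have [a [b Nab]] : exists a b, ~~ tw e a b.
  case: (boolP [exists a, exists b, ~~ tw e a b]) => [/existsP [a /existsP [b H]]|/existsPn H].
    by exists a, b.
  have Hall : forall x y, tw e x y.
    by move=> x y; move/existsPn: (H x) => /(_ y); rewrite negbK.
  have : 0 < #|T| by lia.
  case/card_gt0P => x _.
  by move: (all_tw_false x sym irr Hall); rewrite Hup.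
have Hab : a != b by apply: contraNneq Nab => ->; exact: tw_refl.
have H2 : 2 <= #|T|.
  have : uniq [:: a; b] by rewrite /= inE Hab.
  move/card_uniqP => Hc; apply: leq_trans (max_card (mem [:: a; b])).
  by rewrite Hc.
have Hlow : ~~ has_dist_col e (#|T| - 2) by apply: Hlow'; lia.
have HAB : forall x, tw e a x || tw e b x.
  move=> x; have [->|Nxa] := eqVneq x a; first by rewrite tw_refl.
  have [->|Nxb] := eqVneq x b; first by rewrite tw_refl orbT.
  have Nax : a != x by rewrite eq_sym.
  have Nbx : b != x by rewrite eq_sym.
  case/or3P: (lower_triple sym Hlow Hab Nax Nbx) => H; rewrite ?H ?orbT //.
  by rewrite H in Nab.
case: (boolP [forall x, (x != b) ==> tw e a x]) => [/forallP Hb | /forallPn [b']].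
  have Htw : forall x y, x != b -> y != b -> tw e x y.
    move=> x1 y1 Hx Hy; apply: (tw_trans sym (tw_sym (implyP (Hb x1) Hx))).
    exact: (implyP (Hb y1) Hy).
  have [w Hw] : exists w, (w != a) && (w != b).
    apply/existsP; apply: contraR Nab => /existsPn Hn; apply/twP => w Hwa Hwb.
    by move: (Hn w); rewrite Hwa Hwb.
  case/andP: Hw => Hwa Hwb.
  have Naw : a != w by rewrite eq_sym.
  by case: (star_iso sym irr Hup Htw Hab Hwb Naw) => [H|H];
    [constructor 3 | constructor 4].
rewrite negb_imply => /andP [Nb'b Nt].
have Tbb' : tw e b b' by move: (HAB b'); rewrite (negbTE Nt).
have Nb'a : b' != a by apply: contraNneq Nt => ->; exact: tw_refl.
case: (boolP [forall x, (x != a) ==> tw e b x]) => [/forallP Ha | /forallPn [a']].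
  have Htw : forall x y, x != a -> y != a -> tw e x y.
    move=> x1 y1 Hx Hy; apply: (tw_trans sym (tw_sym (implyP (Ha x1) Hx))).
    exact: (implyP (Ha y1) Hy).
  have Hba : b != a by rewrite eq_sym.
  have Hbb' : b != b' by rewrite eq_sym.
  by case: (star_iso sym irr Hup Htw Hba Nb'a Hbb') => [H|H];
    [constructor 3 | constructor 4].
rewrite negb_imply => /andP [Na'a Nt'].
have Taa' : tw e a a' by move: (HAB a'); rewrite (negbTE Nt') orbF.
have Na'b : a' != b by apply: contraNneq Nt' => ->; exact: tw_refl.
have Na'b' : a' != b' by apply: contraNneq Nt => <-.
have Nt'' : ~~ tw e a' b' by apply: contra Nt; exact: tw_trans sym Taa'.
have Naa' : a != a' by rewrite eq_sym.
have Nab' : a != b' by rewrite eq_sym.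
have Nbb' : b != b' by rewrite eq_sym.
have Nba' : b != a' by rewrite eq_sym.
have [s [Hs Hsa Hsa' Hfix]] :=
  lower_pairs sym Hlow Hab Naa' Nab' Nba' Nbb' Na'b' Nab Nt''.
move/isautP: Hs => Hs.
have F1 : e b b' = e a a' by rewrite -Hsa -Hsa' Hs.
have F2 : forall w, w != a -> w != b -> w != a' -> w != b' -> e b w = e a w.
  by move=> w H1 H3 H4 H5; rewrite -Hsa -{1}(Hfix w H1 H3 H4 H5) Hs.
have Acls : forall x y, tw e a x -> tw e a y -> tw e x y.
  by move=> x y Hx Hy; apply: (tw_trans sym (tw_sym Hx)).
have Bcls : forall x y, ~~ tw e a x -> ~~ tw e a y -> tw e x y.
  move=> x y Hx Hy; have Hbx : tw e b x by move: (HAB x); rewrite (negbTE Hx).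
  have Hby : tw e b y by move: (HAB y); rewrite (negbTE Hy).
  by apply: (tw_trans sym (tw_sym Hbx)).
have CX : forall x y, tw e a x -> ~~ tw e a y -> e x y = e a b.
  move=> x y Hx Hy.
  have Nyx : y != x by apply: contraNneq Hy => ->.
  have Nya : y != a by apply: contraNneq Hy => ->; exact: tw_refl.
  rewrite (twP _ _ _ (Acls _ _ Hx (tw_refl e a)) y Nyx Nya).
  have Nay : a != y by rewrite eq_sym.
  by rewrite (sym a y) (twP _ _ _ (Bcls _ _ Hy Nab) a Nay Hab) sym.
have Hchar : forall x y, e x y =
    (x != y) && (if tw e a x == tw e a y then e a a' else e a b).
  move=> x y; have [<-|Nxy] := eqVneq x y; first by rewrite irr.
  case: (boolP (tw e a x)) => Hx; case: (boolP (tw e a y)) => Hy /=.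
  - exact: (L_in (P := tw e a) sym Acls Hx Hy (tw_refl e a) Taa' Nxy Naa').
  - exact: CX.
  - by rewrite sym CX.
  - rewrite -F1.
    exact: (L_in (P := fun w => ~~ tw e a w) sym Bcls Hx Hy Nab Nt Nxy Nbb').
have Hne : e a a' != e a b.
  apply/negP => /eqP E; move/negP: Nab; apply; apply/twP => w Hwa Hwb.
  by rewrite (Hchar a w) (Hchar b w) E !if_same (eq_sym a w) (eq_sym b w) Hwa Hwb.
case: (boolP [forall x, [|| x == a, x == a', x == b | x == b']]) =>
    [/forallP Hcov|/forallPn [w Hw]].
  have Hside : forall x, side4 a a' x = tw e a x.
    move=> x; rewrite /side4; case/or4P: (Hcov x) => /eqP ->.
    - by rewrite eqxx tw_refl.
    - by rewrite eqxx orbT Taa'.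
    - by rewrite (eq_sym b a) (eq_sym b a') (negbTE Hab) (negbTE Na'b) (negbTE Nab).
    - by rewrite (eq_sym b' a) (eq_sym b' a') (negbTE Nab') (negbTE Na'b') (negbTE Nt).
  have HS : S4 e a a' b b' (e a a') (e a b).
    split => //.
      by rewrite Naa' Hab Nab' Na'b Na'b' Nbb'.
    by move=> x y; rewrite !Hside Hchar.
  by case: (S4_iso HS Hne) => H; [constructor 1 | constructor 2].
move: Hw; rewrite !negb_or => /and4P [Hwa Hwa' Hwb Hwb'].
have := F2 w Hwa Hwb Hwa' Hwb'.
rewrite (Hchar a w) (Hchar b w) (eq_sym b w) (eq_sym a w) Hwa Hwb tw_refl (negbTE Nab) /=.
case: (tw e a w) => /= E.
  by rewrite E eqxx in Hne.
by rewrite E eqxx in Hne.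
Qed.
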